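(* There exist $\varepsilon_0>0$ and $n_0$ such that for every $\varepsilon\in(0,\varepsilon_0]$ and $n\ge n_0$ the following holds. Let $G$ be an $\varepsilon$-superextremal two-clique on $n$ vertices with partition $V(G)=A\uplus B$, and let $f,f'$ be two vertex-disjoint edges of $G$ each having one endpoint in $A$ and one in $B$. Then $G$ has a Hamilton cycle containing $f$ and $f'$.
   Context: For $X\subseteq V(G)$, $d(v,X)$ is the number of neighbours of $v$ in $X$. A graph $G$ on $n$ vertices is an $\varepsilon$-superextremal two-clique (with partition $A\uplus B$) if: (A1) $||A|-|B||\le\varepsilon n$; (A2) $d(a,A)\ge(1/2-\varepsilon)n$ for all but at most $\varepsilon n$ vertices $a\in A$; (A3) $d(a,A)\ge(1/4-\varepsilon)n$ for all $a\in A$; (A4) $d(b,B)\ge(1/2-\varepsilon)n$ for all but at most $\varepsilon n$ vertices $b\in B$; (A5) $d(b,B)\ge(1/4-\varepsilon)n$ for all $b\in B$. *)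

(* Defs.v *)
From HB Require Import structures.
From mathcomp Require Import all_boot all_order all_algebra.
Set Implicit Arguments. Unset Strict Implicit. Unset Printing Implicit Defensive.
Import Order.TTheory GRing.Theory Num.Theory.

Definition simple_graph (T : finType) (e : rel T) : Prop :=
  symmetric e /\ irreflexive e.

Definition deg_in (T : finType) (e : rel T) (v : T) (X : {set T}) : nat :=
  #|[set x in X | e v x]|.

Local Open Scope ring_scope.

Definition superextremal_two_clique (T : finType) (e : rel T) (eps : rat)
    (A B : {set T}) : Prop :=
  let n : rat := (#|T|)%:R in
  ([disjoint A & B] /\ A :|: B = [set: T]) /\
  [/\ `| (#|A|)%:R - (#|B|)%:R | <= eps * n,
      (#|[set a in A | ((deg_in e a A)%:R < (1/2 - eps) * n)%R]|)%:R <= eps * n,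
      (forall a, a \in A -> (1/4 - eps) * n <= (deg_in e a A)%:R),
      (#|[set b in B | ((deg_in e b B)%:R < (1/2 - eps) * n)%R]|)%:R <= eps * n
    & (forall b, b \in B -> (1/4 - eps) * n <= (deg_in e b B)%:R)].

Local Close Scope ring_scope.

Definition hamilton_cycle (T : finType) (e : rel T) (s : seq T) : Prop :=
  [/\ uniq s, size s = #|T|, 3 <= size s & cycle e s].

Definition cycle_has_edge (T : finType) (s : seq T) (u v : T) : Prop :=
  u \in s /\ v \in s /\ (next s u = v \/ next s v = u).

(* Main.v *)
Require Import Defs.
From HB Require Import structures.
From mathcomp Require Import all_boot all_order all_algebra.
From mathcomp Require Import zify lra.
Import Order.TTheory GRing.Theory Num.Theory.
Set Implicit Arguments. Unset Strict Implicit. Unset Printing Implicit Defensive.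

Section Cnt.
Variable T : eqType.

Fixpoint cntp (f : T -> T -> bool) (s : seq T) : nat :=
  if s is a :: s' then
    (if s' is b :: _ then nat_of_bool (f a b) else 0) + cntp f s'
  else 0.

Lemma cntp_cat f p x q : cntp f (p ++ x :: q) = cntp f (rcons p x) + cntp f (x :: q).
Proof.
elim: p => [|a p IH] //=.
rewrite IH; case: p IH => [|b p] IH //=; lia.
Qed.

Lemma cntp_rcons2 f p y x : cntp f (rcons (rcons p y) x) = cntp f (rcons p y) + f y x.
Proof.
have -> : rcons (rcons p y) x = p ++ [:: y; x] by rewrite -!cats1 -catA.
by rewrite cntp_cat /=; lia.
Qed.

Lemma cntp_rev f (fsym : forall a b, f a b = f b a) s : cntp f (rev s) = cntp f s.
Proof.
elim: s => [|a s IH] //; case: s IH => [|b s] IH //.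
rewrite rev_cons rev_cons cntp_rcons2 -rev_cons IH /= fsym; lia.
Qed.

Lemma cntp_swap f (fsym : forall a b, f a b = f b a) P a b M c d Q :
  cntp f (P ++ a :: b :: M ++ c :: d :: Q) + f a c + f b d =
  cntp f (P ++ a :: c :: rev M ++ b :: d :: Q) + f a b + f c d.
Proof.
rewrite !cntp_cat.
have E1 : cntp f (a :: b :: M ++ c :: d :: Q) = f a b + cntp f (rcons (b :: M) c) + f c d + cntp f (d :: Q).
  transitivity (f a b + cntp f ((b :: M) ++ c :: d :: Q)); first by []. rewrite cntp_cat /=; lia.
have E2 : cntp f (a :: c :: rev M ++ b :: d :: Q) = f a c + cntp f (rcons (c :: rev M) b) + f b d + cntp f (d :: Q).
  transitivity (f a c + cntp f ((c :: rev M) ++ b :: d :: Q)); first by []. rewrite cntp_cat /=; lia.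
have E3 : rcons (c :: rev M) b = rev (rcons (b :: M) c) by rewrite rev_rcons rev_cons.
rewrite E1 E2 E3 cntp_rev //; lia.
Qed.

Lemma cntp_le (f g h : T -> T -> bool) s : (forall a b, f a b <= g a b + h a b) -> cntp f s <= cntp g s + cntp h s.
Proof.
move=> H; elim: s => [|a s IH] //=; case: s IH => [|b s] IH //=.
have := H a b; move: IH => /=; lia.
Qed.

Lemma cntp_fst (P : pred T) s z : cntp (fun a _ => P a) (rcons s z) + P z = count P (rcons s z).
Proof.
elim: s => [|a s IH] /=; first lia.
case: s IH => [|b s] IH /=. by case: (P a); case: (P z). move: IH => /=; lia.
Qed.

Lemma cntp_fst1 (P : pred T) s : count P s <= cntp (fun a _ => P a) s + 1.
Proof.
elim: s => [|a s IH] //=; case: s IH => [|b s] IH /=; first by case: (P a). move: IH => /=; case: (P a); case: (P b); lia.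
Qed.

Lemma cntp_snd (P : pred T) x s : cntp (fun _ b => P b) (x :: s) = count P s.
Proof.
elim: s x => [|a s IH] x //=. by rewrite -(IH a).
Qed.

Lemma cntp_pos f s : 0 < cntp f s -> exists p a b q, s = p ++ a :: b :: q /\ f a b.
Proof.
elim: s => [|a s IH] //=; case: s IH => [|b s] IH //=.
case fab: (f a b) => /=.
  by move=> _; exists [::], a, b, s.
move/IH => [p [x [y [q [-> fxy]]]]]; by exists (a :: p), x, y, q.
Qed.

Lemma cntp_zero f p a b q : cntp f (p ++ a :: b :: q) = 0 -> f a b = false.
Proof. rewrite cntp_cat /=; case: (f a b) => //=; lia. Qed.

Lemma cntp_path (r : rel T) x s : (cntp (fun a b => ~~ r a b) (x :: s) == 0) = path r x s.
Proof.
elim: s x => [|y s IH] x //=.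
rewrite -IH /=; case: (r x y) => //=.
Qed.

End Cnt.


Lemma cntp_snd_le (T : eqType) (P : pred T) s : cntp (fun _ b => P b) s <= count P s.
Proof. case: s => [|x s] //; rewrite cntp_snd /=; lia. Qed.

Section TwoOpt.
Variables (T : eqType) (e : rel T) (hi : pred T).
Hypothesis esym : symmetric e.
Hypothesis eirr : irreflexive e.
Definition Rh := fun x y => e x y || hi x || hi y.
Definition nb (r : rel T) s := cntp (fun a b => ~~ r a b) s.

Lemma Rhsym : symmetric Rh.
Proof. by move=> a b; rewrite /Rh esym orbAC. Qed.

Lemma swap_nb (r : rel T) (rsym : symmetric r) P a b M c d Q :
  nb r (P ++ a :: b :: M ++ c :: d :: Q) + ~~ r a c + ~~ r b d =
  nb r (P ++ a :: c :: rev M ++ b :: d :: Q) + ~~ r a b + ~~ r c d.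
Proof. by apply: cntp_swap => u v; rewrite rsym. Qed.

Lemma swap_perm (P : seq T) a b M c d Q :
  perm_eq (P ++ a :: b :: M ++ c :: d :: Q) (P ++ a :: c :: rev M ++ b :: d :: Q).
Proof.
apply/permP => P0; rewrite !count_cat /= !count_cat /= count_rev; lia.
Qed.

Lemma step x0 p x y q : let t := p ++ x :: y :: q in
  ~~ e x y -> count (fun w => ~~ e y w) t + 2 <= count (e x) t ->
  nb Rh t = 0 ->
  exists t', [/\ perm_eq t t', head x0 t' = head x0 t, last x0 t' = last x0 t,
                 nb e t' < nb e t & nb Rh t' = 0].
Proof.
move=> t nxy hc hR.
pose g := fun a b => e x a && e y b.
have tE : t = rcons p x ++ y :: q by rewrite cat_rcons.
have Hg : 0 < cntp g (rcons p x) + cntp g (y :: q).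
  have L1 := @cntp_le _ (fun a _ => e x a) g (fun _ b => ~~ e y b) (rcons p x).
  have L2 := @cntp_le _ (fun a _ => e x a) g (fun _ b => ~~ e y b) (y :: q).
  have H0 : forall a b, e x a <= g a b + ~~ e y b.
    by move=> a b; rewrite /g; case: (e x a); case: (e y b).
  have {}L1 := L1 H0; have {}L2 := L2 H0.
  have F1 := cntp_fst (e x) p x; rewrite eirr in F1.
  have F2 := cntp_fst1 (e x) (y :: q).
  have S1 := cntp_snd_le (fun w => ~~ e y w) (rcons p x).
  have S2 := cntp_snd_le (fun w => ~~ e y w) (y :: q).
  move: hc; rewrite tE !count_cat => hc.
  move: F1 F2 S1 S2 L1 L2 hc.
  set A1 := cntp (fun a _ => e x a) (rcons p x).
  set A2 := cntp (fun a _ => e x a) (y :: q).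
  set B1 := cntp (fun _ b => ~~ e y b) (rcons p x).
  set B2 := cntp (fun _ b => ~~ e y b) (y :: q).
  lia.
have [Hr|Hl] : 0 < cntp g (y :: q) \/ 0 < cntp g (rcons p x) by lia.
- have [P' [w [z [Q [E gwz]]]]] := cntp_pos Hr.
  case/andP: gwz => exw eyz.
  case: P' E => [|y' m] /=.
    by case=> yw _; move: nxy; rewrite yw exw.
  case=> _ qE.
  exists (p ++ x :: w :: rev m ++ y :: z :: Q).
  have Sw := swap_nb esym p x y m w z Q.
  have SR := swap_nb Rhsym p x y m w z Q.
  rewrite /t qE; split.
  + exact: swap_perm.
  + by clear -p; case: p.
  + by rewrite !(last_cat, last_cons).
  + move: Sw; rewrite exw eyz (negbTE nxy) /=; lia.
  + move: SR hR; rewrite /t qE /Rh exw eyz /=; lia.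
- have [P' [w [z [Q [E gwz]]]]] := cntp_pos Hl.
  case/andP: gwz => exw eyz.
  case/lastP: Q E => [|m c].
    have -> : P' ++ [:: w; z] = rcons (rcons P' w) z by rewrite -!cats1 -catA.
    case/rcons_inj => _ xz; rewrite xz esym in nxy.
    by rewrite eyz in nxy.
  have -> : P' ++ [:: w, z & rcons m c] = rcons (P' ++ w :: z :: m) c by rewrite rcons_cat. case/rcons_inj => pE _.
  exists (P' ++ w :: x :: rev m ++ z :: y :: q).
  have Sw := swap_nb esym P' w z m x y q.
  have SR := swap_nb Rhsym P' w z m x y q.
  have tE2 : t = P' ++ w :: z :: m ++ x :: y :: q by rewrite /t pE -catA.
  rewrite tE2; split.
  + exact: swap_perm.
  + by case: P' {tE tE2 pE Sw SR}.
  + by rewrite !(last_cat, last_cons).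
  + move: Sw; rewrite (esym w) exw (esym z) eyz (negbTE nxy) /=; lia.
  + move: SR hR; rewrite tE2 /Rh (esym w) exw (esym z) eyz /=; lia.
Qed.


Lemma head_rev x0 (s : seq T) : head x0 (rev s) = last x0 s.
Proof. by case/lastP: s => // s z; rewrite rev_rcons last_rcons. Qed.

Lemma last_rev x0 (s : seq T) : last x0 (rev s) = head x0 s.
Proof. by case: s => // z s; rewrite rev_cons last_rcons. Qed.

Lemma nb_rev (r : rel T) (rsym : symmetric r) s : nb r (rev s) = nb r s.
Proof. by apply: cntp_rev => a b; rewrite rsym. Qed.

Lemma twoopt x0 k : forall t, nb e t <= k ->
  (forall x y, x \in t -> y \in t -> hi y ->
     count (fun w => ~~ e y w) t + 2 <= count (e x) t) ->
  nb Rh t = 0 ->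
  exists t', [/\ perm_eq t t', head x0 t' = head x0 t, last x0 t' = last x0 t
                 & nb e t' = 0].
Proof.
elim: k => [|k IH] t hk hc hR.
  by exists t; split => //; lia.
case: (posnP (nb e t)) => [h0|hpos].
  by exists t; split.
have [p [x [y [q [tE nxy]]]]] := cntp_pos hpos.
have Rxy : ~~ Rh x y = false by apply: (@cntp_zero _ (fun a b => ~~ Rh a b) p x y q); rewrite -tE.
have hxy : hi x || hi y.
  move: Rxy nxy; rewrite /Rh; case: (e x y) => //=; by case: (hi x); case: (hi y).
have xin : x \in t by rewrite tE mem_cat in_cons eqxx orbT.
have yin : y \in t by rewrite tE mem_cat !in_cons eqxx !orbT.
have [t1 [P1 H1 L1 N1 R1]] : exists t1, [/\ perm_eq t t1, head x0 t1 = head x0 t,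
      last x0 t1 = last x0 t, nb e t1 < nb e t & nb Rh t1 = 0].
  case/orP: hxy => [hx|hy].
  - have rE : rev t = rev q ++ y :: x :: rev p by rewrite tE rev_cat !rev_cons -!cats1 -!catA.
    have s1 : ~~ e y x by rewrite esym.
    have s2 : count (fun w => ~~ e x w) (rev q ++ y :: x :: rev p) + 2 <= count (e y) (rev q ++ y :: x :: rev p).
      by rewrite -rE !count_rev; apply: hc.
    have s3 : nb Rh (rev q ++ y :: x :: rev p) = 0.
      by rewrite -rE nb_rev // => a b; rewrite Rhsym.
    have [t2 [P2 H2 L2 N2 R2]] := step x0 s1 s2 s3.
    rewrite -rE in P2 H2 L2 N2.
    exists (rev t2); split.
    + by apply/permP => P0; rewrite count_rev -(permP P2) count_rev.
    + by rewrite head_rev L2 last_rev.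
    + by rewrite last_rev H2 head_rev.
    + by rewrite (nb_rev esym) -(nb_rev esym t).
    + by rewrite (nb_rev Rhsym).
  - have := @step x0 p x y q; rewrite -tE => /(_ nxy (hc _ _ xin yin hy) hR).
    by [].
have k1 : nb e t1 <= k by lia.
have c1 : forall x y, x \in t1 -> y \in t1 -> hi y ->
     count (fun w => ~~ e y w) t1 + 2 <= count (e x) t1.
  move=> u v; rewrite -!(perm_mem P1) => uin vin hv.
  by have := hc u v uin vin hv; rewrite !(permP P1).
have [t' [P' H' L' N']] := IH t1 k1 c1 R1.
exists t'; split => //.
- exact: perm_trans P1 P'.
- by rewrite H' H1.
- by rewrite L' L1.
Qed.

End TwoOpt.


Lemma card_count (T : finType) (X : {set T}) (s : seq T) (P : pred T) :
  uniq s -> s =i X -> #|[set w in X | P w]| = count P s.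
Proof.
move=> us sX; rewrite -size_filter; move/card_uniqP: (filter_uniq P us) => <-.
by apply: eq_card => w; rewrite !inE mem_filter sX andbC.
Qed.

Lemma count_le3 (T : eqType) (a b c : pred T) s :
  (forall x, a x <= b x + c x) -> count a s <= count b s + count c s.
Proof. move=> H; elim: s => //= x s IH; have := H x; lia. Qed.

Section Inter.
Variable T : eqType.
Fixpoint inter (hs ls : seq T) : seq T :=
  match hs, ls with
  | h :: hs', l :: ls' => h :: l :: inter hs' ls'
  | _, _ => hs ++ ls
  end.

Lemma inter_perm hs ls : perm_eq (inter hs ls) (hs ++ ls).
Proof.
elim: hs ls => [|h hs IH] [|l ls] //=.
apply/permP => P; have := permP (IH ls) P; rewrite /= !count_cat /=; lia.
Qed.

Variables (e : rel T) (hi : pred T).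

Lemma nb_cons2 (r : rel T) a b s : nb r (a :: b :: s) = ~~ r a b + nb r (b :: s).
Proof. by []. Qed.

Lemma allhi_nb a h s b : hi h -> all hi s -> nb (Rh e hi) (a :: h :: s ++ [:: b]) = 0.
Proof.
elim: s a h => [|h' s IH] a h hh /=.
  by move=> _; rewrite !nb_cons2 /Rh hh !orbT.
case/andP=> hh' hs; rewrite nb_cons2 (IH h h' hh' hs) /Rh hh !orbT.
by [].
Qed.

Lemma inter_nb hs ls a b : all hi hs -> size ls < size hs ->
  nb (Rh e hi) (a :: inter hs ls ++ [:: b]) = 0.
Proof.
elim: hs ls a => [|h hs IH] [|l ls] a //=.
- by case/andP=> hh ahs _; rewrite cats0 allhi_nb.
- case/andP=> hh ahs; rewrite ltnS => hsz.
  rewrite !nb_cons2 (IH ls l ahs hsz) /Rh hh !orbT.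
  by [].
Qed.
End Inter.


Lemma hampath (T : finType) (e : rel T) (X : {set T}) (n : nat) (u v : T) :
  symmetric e -> irreflexive e -> u \in X -> v \in X -> u != v -> 100 <= n ->
  (forall x, x \in X -> 24 * n <= 100 * deg_in e x X) ->
  #|[set x in X | n < 10 * #|[set w in X | ~~ e x w]|]| * 100 <= n ->
  495 * n <= 1000 * #|X| ->
  exists t0, [/\ uniq (u :: t0), (forall x, (x \in u :: t0) = (x \in X)),
                 last u t0 = v & path e u t0].
Proof.
move=> esym eirr uX vX uv n100 hdeg hlow hX.
have [s0 [us0 s0X cardX]] : exists s0, [/\ uniq s0, s0 =i X & size s0 = #|X|].
  exists (enum X); split; [exact: enum_uniq| move=> x; exact: mem_enum| by rewrite cardE].
pose nd x := #|[set w in X | ~~ e x w]|.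
pose hi := fun x => 10 * nd x <= n.
pose hs := filter (fun w => hi w && (w != u) && (w != v)) s0.
pose ls := filter (fun w => ~~ hi w && (w != u) && (w != v)) s0.
have cnh : count (fun x => ~~ hi x) s0 * 100 <= n.
  move: hlow; rewrite (card_count _ us0 s0X).
  by rewrite (@eq_count _ _ (fun x => ~~ hi x)) // => x; rewrite /hi -ltnNge.
have cX : count hi s0 + count (fun x => ~~ hi x) s0 = #|X|.
  by rewrite count_predC cardX.
have chs : count hi s0 <= size hs + 2.
  rewrite size_filter.
  have := @count_le3 _ hi (fun w => hi w && (w != u) && (w != v)) (fun w => (w == u) || (w == v)) s0.
  have := @count_le3 _ (fun w => (w == u) || (w == v)) (pred1 u) (pred1 v) s0.
  have := count_uniq_mem u us0; have := count_uniq_mem v us0.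
  move=> c1 c2 H1 H2.
  have {}H1 : count (fun w => (w == u) || (w == v)) s0 <= count (pred1 u) s0 + count (pred1 v) s0.
    by apply: H1 => w /=; case: (w == u); case: (w == v).
  have {}H2 : count hi s0 <= count (fun w => hi w && (w != u) && (w != v)) s0 + count (fun w => (w == u) || (w == v)) s0.
    by apply: H2 => w /=; case: (hi w); case: (w == u); case: (w == v).
  move: c1 c2.
  case: (u \in s0); case: (v \in s0); lia.
have cls : size ls <= count (fun x => ~~ hi x) s0.
  by rewrite size_filter; apply: sub_count => x /andP[/andP[]].
have szlt : size ls < size hs by lia.
have allhs : all hi hs by apply/allP => x; rewrite mem_filter => /andP[/andP[/andP[]]].
pose t := u :: inter hs ls ++ [:: v].
have tX : forall x, (x \in t) = (x \in X).
  move=> x; rewrite in_cons mem_cat (perm_mem (inter_perm hs ls)) !mem_cat !mem_filter !in_cons in_nil !s0X.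
  case: (eqVneq x u) => [->|xu]; first by rewrite uX.
  case: (eqVneq x v) => [->|xv]; first by rewrite vX !orbT.
  by rewrite /=; case: (hi x); case: (x \in X).
have ut : uniq t.
  rewrite /t cons_uniq mem_cat negb_or cat_uniq (perm_mem (inter_perm hs ls)) (perm_uniq (inter_perm hs ls)).
  rewrite !mem_cat !mem_filter !in_cons in_nil cat_uniq !filter_uniq //= !andbT.
  rewrite !eqxx /= !andbF /= (negbTE uv) (perm_mem (inter_perm hs ls)) !mem_cat !mem_filter !eqxx /= !andbF /= andbT.
  apply/hasPn => x; rewrite mem_filter => /andP[/andP[/andP[nh _] _] _].
  by rewrite mem_filter (negbTE nh).
have hc : forall x y, x \in t -> y \in t -> hi y ->
    count (fun w => ~~ e y w) t + 2 <= count (e x) t.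
  move=> x y; rewrite !tX => xX yX; rewrite /hi /nd.
  have := hdeg x xX; rewrite /deg_in !(card_count _ ut tX); lia.
have hR : nb (Rh e hi) t = 0 by apply: inter_nb.
have [t' [P' H' L' N']] := @twoopt _ e hi esym eirr u (nb e t) t (leqnn _) hc hR.
case: t' P' H' L' N' => [|y t0] P'.
  by move/perm_size: P'.
move=> /= yu; rewrite yu => L' N'.
exists t0; split.
- by move: ut; rewrite (perm_uniq P') yu.
- by move=> x; rewrite -tX (perm_mem P') yu.
- by rewrite L' /t /= last_cat.
- by rewrite -cntp_path; apply/eqP.
Qed.


Lemma next_last_uniq (T : eqType) (x : T) p : uniq (x :: p) -> next (x :: p) (last x p) = x.
Proof.
move=> u; rewrite next_nth mem_last index_last //=.
by rewrite nth_default.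
Qed.

Lemma next_mid (T : eqType) (p q : seq T) x y :
  uniq (p ++ x :: y :: q) -> next (p ++ x :: y :: q) x = y.
Proof.
move=> u; rewrite next_nth mem_cat in_cons eqxx orbT.
case: p u => [|z p] /=; first by rewrite eqxx.
case/andP=> zn u.
have zx : (z == x) = false.
  by apply/negbTE; apply: contraNneq zn => ->; rewrite mem_cat in_cons eqxx orbT.
have xp : x \notin p.
  move: u; rewrite cat_uniq => /and3P[_ /hasPn H _].
  by apply/negP => xp; have := H x; rewrite in_cons eqxx /= => /(_ isT); rewrite xp.
rewrite zx index_cat (negbTE xp) /= eqxx addn0 nth_cat ltnNge leqnSn /= subSn // subnn.
by [].
Qed.


Lemma deg_nd (T : finType) (X : {set T}) (P : pred T) :
  #|[set w in X | P w]| + #|[set w in X | ~~ P w]| = #|X|.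
Proof.
rewrite -(cardsID [set w | P w] X); congr (_ + _); apply: eq_card => w; rewrite !inE //; by rewrite andbC.
Qed.

Local Open Scope ring_scope.

Lemma side_facts (T : finType) (e : rel T) (eps : rat) (X Y : {set T}) (n : nat) :
  0 < eps -> eps <= 1/100 -> (#|X| + #|Y| = n)%N ->
  `|(#|X|)%:R - (#|Y|)%:R| <= eps * n%:R ->
  (#|[set a in X | ((deg_in e a X)%:R < (1/2 - eps) * n%:R)%R]|)%:R <= eps * n%:R ->
  (forall a, a \in X -> (1/4 - eps) * n%:R <= (deg_in e a X)%:R) ->
  [/\ forall x, x \in X -> (24 * n <= 100 * deg_in e x X)%N,
      (#|[set x in X | (n < 10 * #|[set w in X | ~~ e x w]|)%N]| * 100 <= n)%N &
      (495 * n <= 1000 * #|X|)%N].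
Proof.
move=> e0 e1 hn a1 a2 a3.
have n0 : (0 : rat) <= n%:R by rewrite ler0n.
have en : eps * n%:R <= n%:R / 100.
  have := ler_wpM2r n0 e1; lra.
have hn' : (#|X|)%:R + (#|Y|)%:R = n%:R :> rat by rewrite -natrD hn.
move: a1; rewrite ler_norml => /andP[a1 a1'].
split.
- move=> x xX; rewrite -(ler_nat rat) !natrM; have := a3 x xX; lra.
- rewrite -(ler_nat rat) natrM.
  have sub : [set x in X | (n < 10 * #|[set w in X | ~~ e x w]|)%N] \subset
             [set a in X | ((deg_in e a X)%:R < (1/2 - eps) * n%:R)%R].
    apply/subsetP => x; rewrite !inE => /andP[xX hx]; rewrite xX /=.
    have := deg_nd X (e x); rewrite /deg_in => dd.
    have : (n%:R < (10 * #|[set w in X | ~~ e x w]|)%N%:R :> rat) by rewrite ltr_nat.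
    have dd2 : (#|[set w in X | e x w]|)%:R + (#|[set w in X | ~~ e x w]|)%:R = (#|X|)%:R :> rat by rewrite -natrD dd.
    rewrite natrM; lra.
  have := subset_leq_card sub; rewrite -(ler_nat rat) => hc.
  lra.
- rewrite -(ler_nat rat) !natrM; lra.
Qed.

Local Close Scope ring_scope.
Unset Implicit Arguments.

Theorem mainTheorem8 :
  exists (eps0 : rat) (n0 : nat), (0 < eps0)%R /\
  forall (eps : rat) (T : finType) (e : rel T) (A B : {set T}) (a b a' b' : T),
    (0 < eps)%R -> (eps <= eps0)%R -> n0 <= #|T| ->
    simple_graph e ->
    superextremal_two_clique e eps A B ->
    a \in A -> b \in B -> a' \in A -> b' \in B ->
    e a b -> e a' b' ->
    a != a' -> b != b' ->
    exists s : seq T, hamilton_cycle e s /\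
      cycle_has_edge s a b /\ cycle_has_edge s a' b'.
Proof.
exists (1/100)%R, 1000; split; first lra.
move=> eps T e A B a b a' b' e0 e1 n1000 [esym eirr] [[dis un] [a1 a2 a3 a4 a5]] aA bB a'A b'B eab ea'b' aa' bb'.
have hn : #|A| + #|B| = #|T|.
  by rewrite -cardsUI un cardsT (disjoint_setI0 dis) cards0 addn0.
have [hA1 hA2 hA3] := side_facts e0 e1 hn a1 a2 a3.
have hn2 : #|B| + #|A| = #|T| by rewrite addnC.
have a1b : (`|(#|B|)%:R - (#|A|)%:R| <= eps * (#|T|)%:R)%R by rewrite distrC.
have [hB1 hB2 hB3] := side_facts e0 e1 hn2 a1b a4 a5.
have n100 : 100 <= #|T| by apply: leq_trans n1000.
have [tA [uA mA lA pA]] := hampath esym eirr aA a'A aa' n100 hA1 hA2 hA3.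
have b'b : b' != b by rewrite eq_sym.
have [tB [uB mB lB pB]] := hampath esym eirr b'B bB b'b n100 hB1 hB2 hB3.
have us : uniq ((a :: tA) ++ (b' :: tB)).
  rewrite cat_uniq uA uB andbT; apply/hasPn => x; rewrite mB => xB.
  by rewrite mA (disjointFl dis xB).
have ms : forall x, x \in (a :: tA) ++ (b' :: tB).
  move=> x; rewrite mem_cat mA mB; have := in_setT x; by rewrite -un inE.
have sz : size ((a :: tA) ++ (b' :: tB)) = #|T|.
  move/card_uniqP: us => <-; apply: eq_card => x; by rewrite ms.
have sE : (a :: tA) ++ (b' :: tB) = belast a tA ++ a' :: b' :: tB.
  by rewrite lastI lA cat_rcons.
exists ((a :: tA) ++ (b' :: tB)); split; [split|split].
- exact: us.
- exact: sz.
- by rewrite sz; apply: leq_trans n1000.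
- rewrite /= rcons_cat cat_path pA lA /= ea'b' rcons_path pB lB esym eab.
  by [].
- split; [by rewrite ms | split; [by rewrite ms| right]].
  have -> : b = last a (tA ++ b' :: tB) by rewrite last_cat lA /= lB.
  exact: next_last_uniq.
- split; [by rewrite ms | split; [by rewrite ms| left]].
  rewrite sE; apply: next_mid; by rewrite -sE.
Qed.
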